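(* In the errorless symmetric relay network described in the context, under the greedy policy $G$ the AoI reductions satisfy, for every time slot $t\ge1$, \[ R(\mathcal{S}^{G}(t))=\min\{tS,K\},\qquad R(\mathcal{U}^{G}(t))=\min\{(t-1)U,K\}. \]
   Context: Fix integers $K\ge 2$ and $S,U$ with $1\le S<K$, $1\le U<K$, and $S=U$. There are $K$ processes indexed by $k\in\{1,\dots,K\}$ and time slots $t=1,2,\dots$. The state at time $t$ consists of relay AoI values $g_k(t)$ and destination AoI values $h_k(t)$, with $g_k(1)=h_k(1)=1$ for all $k$. A policy $\pi$ is a map assigning to the current state a pair $(\mathcal{S}^{\pi}(t),\mathcal{U}^{\pi}(t))$ of subsets of $\{1,\dots,K\}$ with $|\mathcal{S}^{\pi}(t)|=S$ and $|\mathcal{U}^{\pi}(t)|=U$. Errorless dynamics: $g_k(t+1)=1$ if $k\in\mathcal{S}(t)$, else $g_k(t+1)=g_k(t)+1$; $h_k(t+1)=g_k(t)+1$ if $k\in\mathcal{U}(t)$, else $h_k(t+1)=h_k(t)+1$. Define $R(\mathcal{S}^{\pi}(\tau))=\sum_{k\in\mathcal{S}^{\pi}(\tau)} g_k^{\pi}(\tau)$ and $R(\mathcal{U}^{\pi}(\tau))=\sum_{k\in\mathcal{U}^{\pi}(\tau)}(h_k^{\pi}(\tau)-g_k^{\pi}(\tau))$. The greedy policy $G$ chooses at each time $t$ a set $\mathcal{S}^G(t)$ of $S$ indices with the largest values $g_k(t)$ (maximizing $\sum_{k\in\mathcal{S}}g_k(t)$ over $|\mathcal{S}|=S$) and a set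 $\mathcal{U}^G(t)$ of $U$ indices with the largest gaps $h_k(t)-g_k(t)$ (maximizing $\sum_{k\in\mathcal{U}}(h_k(t)-g_k(t))$ over $|\mathcal{U}|=U$). *)

(* Defs.v *)
From HB Require Import structures.
From mathcomp Require Import all_boot all_order all_algebra.
Set Implicit Arguments. Unset Strict Implicit. Unset Printing Implicit Defensive.
Import Order.TTheory GRing.Theory Num.Theory.

(* Processes are indexed by 'I_K (0-based: k = 0..K-1).
   A state is the pair (g, h) of relay AoI and destination AoI vectors. *)
Definition state (K : nat) := ({ffun 'I_K -> nat} * {ffun 'I_K -> nat})%type.

Definition policy (K : nat) := state K -> ({set 'I_K} * {set 'I_K})%type.

Definition RS (K : nat) (st : state K) (A : {set 'I_K}) : nat :=
  \sum_(k in A) st.1 k.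
Definition RU (K : nat) (st : state K) (B : {set 'I_K}) : int :=
  (\sum_(k in B) ((st.2 k)%:Z - (st.1 k)%:Z))%R.

Definition step (K : nat) (st : state K) (SU : {set 'I_K} * {set 'I_K}) : state K :=
  ([ffun k => if k \in SU.1 then 1 else (st.1 k).+1],
   [ffun k => if k \in SU.2 then (st.1 k).+1 else (st.2 k).+1]).

Definition init_state (K : nat) : state K := ([ffun => 1], [ffun => 1]).

(* traj pol n = state at time slot t = n+1 *)
Fixpoint traj (K : nat) (pol : policy K) (n : nat) : state K :=
  match n with
  | 0 => init_state K
  | n'.+1 => step (traj pol n') (pol (traj pol n'))
  end.

Definition state_at (K : nat) (pol : policy K) (t : nat) : state K := traj pol t.-1.

(* G is a greedy policy (with arbitrary tie-breaking): at every state it picks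
   S indices maximizing the sum of g and U indices maximizing the sum of gaps h-g. *)
Definition greedy (K S U : nat) (pol : policy K) : Prop :=
  forall st : state K,
    [/\ #|(pol st).1| = S, #|(pol st).2| = U,
        (forall A : {set 'I_K}, #|A| = S -> RS st A <= RS st (pol st).1) &
        (forall B : {set 'I_K}, #|B| = U -> (RU st B <= RU st (pol st).2)%R)].

(* Main.v *)
Require Import Defs.
From HB Require Import structures.
From mathcomp Require Import all_boot all_order all_algebra zify.
Import Order.TTheory GRing.Theory Num.Theory.
Set Implicit Arguments. Unset Strict Implicit.

Lemma top_count K S (st: state K) (A : {set 'I_K}) : #|A| = S ->
  (forall B : {set 'I_K}, #|B| = S -> RS st B <= RS st A) ->
  forall w, #|[set k in A | w < st.1 k]| = minn S #|[set k | w < st.1 k]|.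
Proof.
move=> cA opt w.
set X := [set k in A | w < st.1 k]; set Y := [set k | w < st.1 k].
have XA : X \subset A by apply/subsetP => k; rewrite inE => /andP[].
have XY : X \subset Y by apply/subsetP => k; rewrite !inE => /andP[].
apply/eqP; rewrite eqn_leq leq_min -cA !subset_leq_card // andbT.
rewrite leqNgt; apply/negP => lt.
case: (boolP [exists i in A, ~~ (w < st.1 i)]) => [/existsP[i /andP[iA gi]]|].
  case: (boolP [exists j in Y, j \notin A]) => [/existsP[j /andP[jY jA]]|].
    set B := j |: (A :\ i).
    have jAi : j \notin A :\ i by rewrite !inE negb_and jA orbT.
    have cB : #|B| = S.
      by rewrite cardsU1 jAi -cA (cardsD1 i A) iA.
    have := opt B cB.
    rewrite /RS /B big_setU1 //= (big_setD1 i iA) /=.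
    move: jY; rewrite inE => jY. move: gi; rewrite -leqNgt => gi.
    rewrite leq_add2r leqNgt; move/negP; apply.
    exact: leq_ltn_trans gi jY.
  rewrite negb_exists => /forallP H.
  have : Y \subset X.
    apply/subsetP => k kY; have := H k; rewrite kY /= negbK => kA.
    by move: kY; rewrite !inE kA.
  move/subset_leq_card => h.
  by move: lt; rewrite ltnNge (leq_trans (geq_minr _ _) h).
rewrite negb_exists => /forallP H.
have : A \subset X.
  apply/subsetP => k kA; have := H k; rewrite kA /= negbK => kw.
  by rewrite inE kA.
move/subset_leq_card => h.
by move: lt; rewrite ltnNge (leq_trans (geq_minl _ _) h).
Qed.

Lemma traj_S K (G : policy K) n : traj G n.+1 = step (traj G n) (G (traj G n)).
Proof. by []. Qed.

Lemma g_pos K (G : policy K) n k : 0 < (traj G n).1 k.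
Proof. by case: n => [|n]; rewrite /= ffunE // ; case: ifP. Qed.

Lemma cnt_inv K S (G : policy K) : greedy S S G ->
  forall n w, #|[set k | w < (traj G n).1 k]| = if w <= n then K - w * S else 0.
Proof.
move=> gr; elim=> [|n IH] w.
  case: w => [|w] /=.
    rewrite subn0 -[RHS](card_ord K) -cardsT; apply: eq_card => k.
    by rewrite !inE ffunE.
  apply/eqP; rewrite cards_eq0; apply/eqP/setP => k; rewrite !inE ffunE /=.
  by rewrite ltnS leqn0.
have [cA _ optA _] := gr (traj G n).
set A := (G (traj G n)).1 in cA optA *.
case: w => [|w].
  rewrite subn0 -[RHS](card_ord K) -cardsT; apply: eq_card => k.
  by rewrite !inE g_pos.
have -> : [set k | w.+1 < (traj G n.+1).1 k] = [set k | w < (traj G n).1 k] :\: A.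
  apply/setP => k; rewrite traj_S !inE /= ffunE /A.
  by case: ifP.
rewrite cardsD.
have -> : [set k | w < (traj G n).1 k] :&: A = [set k in A | w < (traj G n).1 k].
  by apply/setP => k; rewrite !inE andbC.
rewrite (top_count cA optA) IH ltnS.
case: ifP => _; lia.
Qed.

Lemma sum_lt N g : \sum_(w < N) (w < g : nat) = minn g N.
Proof.
elim: N => [|N IH]; first by rewrite big_ord0 minn0.
rewrite big_ord_recr /= IH; case: (ltnP N g) => h; lia.
Qed.

Lemma sum_min S K m : \sum_(w < m) minn S (K - w * S) = minn (m * S) K.
Proof.
elim: m => [|m IH]; first by rewrite big_ord0 mul0n min0n.
rewrite big_ord_recr /= IH mulSn; lia.
Qed.

Lemma RS_val K S (G : policy K) : greedy S S G ->
  forall n, RS (traj G n) (G (traj G n)).1 = minn (n.+1 * S) K.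
Proof.
move=> gr n.
have [cA _ optA _] := gr (traj G n).
set A := (G (traj G n)).1 in cA optA *.
have le : forall k, (traj G n).1 k <= n.+1.
  move=> k; have := cnt_inv gr n n.+1; rewrite ltnn => /eqP; rewrite cards_eq0.
  move/eqP => E; have := congr1 (fun X : {set 'I_K} => k \in X) E.
  by rewrite !inE => /negbT; rewrite -leqNgt.
rewrite /RS.
rewrite (eq_bigr (fun k => \sum_(w < n.+1) (w < (traj G n).1 k : nat))); last first.
  by move=> k _; rewrite sum_lt; apply/esym/minn_idPl.
rewrite exchange_big /= -sum_min; apply: eq_bigr => w _.
rewrite -big_mkcondr /= sum1_card.
have := top_count cA optA w; rewrite (cnt_inv gr) -ltnS ltn_ord => <-.
by apply: eq_card => k; rewrite !inE.
Qed.

Lemma sum_subset K (B C : {set 'I_K}) (f : 'I_K -> nat) : B \subset C ->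
  \sum_(k in B) f k <= \sum_(k in C) f k.
Proof.
move=> BC; rewrite [X in X <= _]big_mkcond [X in _ <= X]big_mkcond /=.
apply: leq_sum => k _; case: ifP => // kB.
by rewrite (subsetP BC k kB).
Qed.

Lemma Posz_sum K (B : {set 'I_K}) (f : 'I_K -> nat) :
  Posz (\sum_(k in B) f k) = (\sum_(k in B) Posz (f k))%R.
Proof. exact: (big_morph Posz PoszD (erefl _)). Qed.

Section Gap.
Variables (K : nat) (st : state K) (A' : {set 'I_K}) (c : 'I_K -> nat).
Hypothesis hst : forall k, st.2 k = st.1 k + (if k \in A' then c k else 0).
Hypothesis cpos : forall k, 0 < c k.

Let f k := if k \in A' then c k else 0.

Lemma RU_D (B : {set 'I_K}) : RU st B = Posz (\sum_(k in B) f k).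
Proof.
rewrite /RU Posz_sum; apply: eq_bigr => k _.
by rewrite hst PoszD addrC addKr.
Qed.

Lemma D_A' : \sum_(k in A') f k = \sum_(k in A') c k.
Proof. by apply: eq_bigr => k kA; rewrite /f kA. Qed.

Lemma D_le (B : {set 'I_K}) : \sum_(k in B) f k <= \sum_(k in A') f k.
Proof.
apply: (@leq_trans (\sum_(k in [set: 'I_K]) f k)).
  exact: sum_subset (subsetT B).
rewrite [X in X <= _]big_mkcond [X in _ <= X]big_mkcond /=.
apply: leq_sum => k _; rewrite in_setT /f; by case: ifP.
Qed.

Lemma B_eq (B : {set 'I_K}) : #|B| = #|A'| -> \sum_(k in A') f k <= \sum_(k in B) f k -> B = A'.
Proof.
move=> cB opt; apply/eqP; rewrite eq_sym eqEcard cB leqnn andbT.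
apply/subsetP => k0 k0A; apply/negPn/negP => k0B.
have : \sum_(k in B) f k <= \sum_(k in [set~ k0]) f k.
  apply: sum_subset; apply/subsetP => k kB; rewrite !inE.
  by apply/negP => /eqP ek; move: k0B; rewrite -ek kB.
have := D_le [set: 'I_K].
rewrite (bigD1 k0) ?in_setT //=.
have -> : \sum_(i in [set: 'I_K] | i != k0) f i = \sum_(k in [set~ k0]) f k.
  by apply: eq_bigl => k; rewrite !inE.
have fk0 : f k0 = c k0 by rewrite /f k0A.
rewrite fk0; have := cpos k0; move: opt => opt cp h2 h1.
have := leq_trans h2 (leq_trans opt h1).
by rewrite -[X in _ <= X]add0n leq_add2r leqn0 => /eqP c0; rewrite c0 in cp.
Qed.
End Gap.

Lemma Beq_gen K S (G : policy K) (st : state K) (A' : {set 'I_K}) (c : 'I_K -> nat) :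
  greedy S S G ->
  (forall k, st.2 k = st.1 k + (if k \in A' then c k else 0)) ->
  (forall k, 0 < c k) -> #|A'| = S -> (G st).2 = A'.
Proof.
move=> gr hst cpos cA.
have [_ cB _ optB] := gr st.
apply: (B_eq cpos); first by rewrite cB cA.
by have := optB A' cA; rewrite !(RU_D hst) lez_nat.
Qed.

Lemma gap_inv K S (G : policy K) : greedy S S G -> forall n k,
  (traj G n.+1).2 k = (traj G n.+1).1 k +
     (if k \in (G (traj G n)).1 then (traj G n).1 k else 0).
Proof.
move=> gr; elim=> [|n IH] k.
  rewrite traj_S /step /= !ffunE.
  by case: ifP; case: ifP.
have Beq : (G (traj G n.+1)).2 = (G (traj G n)).1.
  have [cA _ _ _] := gr (traj G n).
  exact: (Beq_gen gr IH (fun k => g_pos G n k) cA).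
rewrite [traj G n.+2]traj_S.
have := IH k; move: Beq.
move: (traj G n.+1) => st Beq IHk.
rewrite /step /= !ffunE Beq; move: IHk.
move=> ->; case: (k \in (G (traj G n)).1); case: (k \in (G st).1) => /=; lia.
Qed.

Theorem proposition3 (K S U : nat) (G : policy K) :
  2 <= K -> 1 <= S < K -> 1 <= U < K -> S = U ->
  greedy S U G ->
  forall t : nat, 1 <= t ->
    RS (state_at G t) (G (state_at G t)).1 = minn (t * S) K /\
    RU (state_at G t) (G (state_at G t)).2 = Posz (minn (t.-1 * U) K).
Proof.
move=> _ _ _ <- gr [//|n] _; rewrite /state_at /=.
split; first exact: RS_val.
case: n => [|m].
  rewrite mul0n min0n /RU big1 // => k _.
  by rewrite /= !ffunE subrr.
have hst := gap_inv gr m.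
have [cA _ _ _] := gr (traj G m).
rewrite (Beq_gen gr hst (fun k => g_pos G m k) cA) (RU_D hst) D_A'.
by have := RS_val gr m; rewrite /RS => ->.
Qed.
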